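(* Let $u=u_1u_2\cdots u_t\in\{b,d\}^+$ be a nonempty word containing $i$ copies of $b$ and $j$ copies of $d$, and write $au(n)$ for $a(u_1(u_2(\cdots u_t(n)\cdots)))$ (similarly $ab(n)=a(b(n))$). Then for all $n\ge 1$, $$au(n)=F_{i+2j}\cdot ab(n)+F_{i+2j-1}\cdot a(n)+C(u)\cdot(2x(n)-1),$$ where $C(u)$ is defined recursively by $C(b)=0$, $C(d)=1$, and, for a nonempty word $v$ (with $i,j$ still the letter counts of $u$), $C(vb)=F_{i+2j-1}+C(v)$ if $u=vb$, and $C(vd)=F_{i+2j-1}-C(v)$ if $u=vd$.
   Context: $\varphi=(1+\sqrt5)/2$. Let $(F_n)_{n\ge 0}$ be the Fibonacci numbers: $F_0=0$, $F_1=1$, $F_n=F_{n-1}+F_{n-2}$ for $n\ge 2$. Define $(a(n))_{n\ge 0}$ (OEIS A105774) by $a(0)=0$, $a(1)=1$, and for $n\ge 2$, $a(n)=F_{j+1}-a(n-F_j)$, where $j\ge 2$ is the unique index with $F_j<n\le F_{j+1}$. Let $b(n)=\lfloor \varphi n\rfloor$, $d(n)=\lfloor\varphi^2 n\rfloor$, and $x(n)=a(b(n))-b(a(n))$. *)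

(* Defs.v *)
From Stdlib Require Import Reals ZArith Arith List.
Import ListNotations.

Fixpoint fib (n : nat) : nat :=
  match n with
  | O => O
  | S m => match m with
           | O => 1
           | S k => fib m + fib k
           end
  end.

Fixpoint fib_index_from (fuel k n : nat) : nat :=
  match fuel with
  | O => k
  | S f => if Nat.leb n (fib (S k)) then k else fib_index_from f (S k) n
  end.

(* For n >= 2: the unique j >= 2 with F_j < n <= F_{j+1}
   (= the least j >= 2 with n <= F_{j+1}; fuel n suffices since n <= F_{n+3}). *)
Definition fib_index (n : nat) : nat := fib_index_from n 2 n.

(* a(0)=0, a(1)=1, a(n) = F_{j+1} - a(n - F_j) for n >= 2 (OEIS A105774).
   Fuel n suffices because the argument strictly decreases.  The subtraction
   is exact: a(m) <= F_{k+1} whenever m <= F_{k+1}. *)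
Fixpoint a_fuel (fuel n : nat) : nat :=
  match fuel with
  | O => O
  | S f =>
      match n with
      | O => O
      | S O => 1
      | _ => let j := fib_index n in fib (S j) - a_fuel f (n - fib j)
      end
  end.

Definition a (n : nat) : nat := a_fuel n n.

Open Scope R_scope.

Definition phi : R := (1 + sqrt 5) / 2.

(* Int_part r = up r - 1 is the floor of r. *)
Definition b (n : nat) : nat := Z.to_nat (Int_part (phi * INR n)).
Definition d (n : nat) : nat := Z.to_nat (Int_part (phi ^ 2 * INR n)).

Close Scope R_scope.

Definition x (n : nat) : Z := (Z.of_nat (a (b n)) - Z.of_nat (b (a n)))%Z.

Inductive letter : Set := Lb | Ld.

Definition letter_fun (l : letter) : nat -> nat :=
  match l with Lb => b | Ld => d end.

Definition apply_word (u : list letter) (n : nat) : nat :=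
  fold_right letter_fun n u.

Definition count_b (u : list letter) : nat :=
  length (filter (fun l => match l with Lb => true | Ld => false end) u).
Definition count_d (u : list letter) : nat :=
  length (filter (fun l => match l with Ld => true | Lb => false end) u).

(* C on the reversed word: r = rev u, so the head of r is the LAST letter of u. *)
Fixpoint C_rev (r : list letter) : Z :=
  match r with
  | [] => 0%Z
  | [Lb] => 0%Z
  | [Ld] => 1%Z
  | Lb :: r' => (Z.of_nat (fib (count_b r + 2 * count_d r - 1)) + C_rev r')%Z
  | Ld :: r' => (Z.of_nat (fib (count_b r + 2 * count_d r - 1)) - C_rev r')%Z
  end.

Definition C_word (u : list letter) : Z := C_rev (rev u).

(* Main.v *)
Require Import Defs.
From Stdlib Require Import Reals ZArith Arith List Lia Lra.
Import ListNotations.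

Lemma fib_SS k : fib (S (S k)) = fib (S k) + fib k.
Proof. reflexivity. Qed.

Lemma fib_mono_S k : fib k <= fib (S k).
Proof. destruct k; simpl; [lia|]. destruct k; simpl; lia. Qed.

Lemma fib_mono a0 b0 : a0 <= b0 -> fib a0 <= fib b0.
Proof. induction 1; [lia|]. pose proof (fib_mono_S m); lia. Qed.

Lemma fib_pos k : 1 <= k -> 1 <= fib k.
Proof. intros H. destruct k; [lia|]. induction k; [simpl; lia|].
  rewrite fib_SS. lia. Qed.

Lemma fib_lt_inv a0 b0 : fib a0 < fib b0 -> a0 < b0.
Proof. intros H. destruct (le_lt_dec b0 a0) as [Hl|Hl]; [|exact Hl]. pose proof (fib_mono _ _ Hl). lia. Qed.

Lemma fib_ge k : k <= fib k + 1.
Proof. induction k as [k IH] using lt_wf_ind.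
  destruct k as [|[|k]]; [simpl; lia|simpl; lia|].
  rewrite fib_SS. pose proof (IH (S k) ltac:(lia)).
  destruct k; [simpl; lia|]. pose proof (fib_pos (S k) ltac:(lia)). lia. Qed.

Fixpoint gapsok (Z : list nat) : Prop :=
  match Z with [] => True | j :: t => Forall (fun e => e + 2 <= j) t /\ gapsok t end.
Definition valid (Z : list nat) := Forall (fun e => 2 <= e) Z /\ gapsok Z.

Fixpoint Nz (Z : list nat) : nat := match Z with [] => 0 | j :: t => fib j + Nz t end.

Lemma N_bound : forall Z h, valid Z -> Forall (fun e => e <= h) Z -> Nz Z < fib (S h).
Proof.
  induction Z as [|j t IH]; intros h [H1 H2] H3; cbn [Nz].
  - pose proof (fib_pos (S h) ltac:(lia)); lia.
  - inversion H1; subst. inversion H3; subst. destruct H2 as [Hg Hg2].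
    assert (Nz t < fib (S (j - 2))).
    { apply IH. split; auto. eapply Forall_impl; [|exact Hg]. simpl; intros; lia. }
    replace (S (j-2)) with (j - 1) in H by lia.
    assert (fib (S j) = fib j + fib (j-1)).
    { destruct j as [|[|j]]; [lia|lia|]. rewrite fib_SS. f_equal. }
    pose proof (fib_mono (S j) (S h)). lia.
Qed.

Lemma N_ge_elem : forall Z, Forall (fun e => fib e <= Nz Z) Z.
Proof. induction Z as [|j t IH]; simpl; constructor; [lia|].
  eapply Forall_impl; [|exact IH]. simpl; intros; lia. Qed.

Lemma fib_bracket p : 1 <= p -> exists j, 2 <= j /\ fib j <= p < fib (S j).
Proof.
  induction p; [lia|]. intros _. destruct p.
  - exists 2. simpl. lia.
  - destruct IHp as [j [Hj [H1 H2]]]; [lia|].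
    destruct (Nat.eq_dec (S (S p)) (fib (S j))).
    + exists (S j). split; [lia|]. rewrite fib_SS. pose proof (fib_pos j). lia.
    + exists j. lia.
Qed.

Lemma zeck_exists : forall p, exists Z, valid Z /\ Nz Z = p.
Proof.
  induction p as [p IH] using lt_wf_ind.
  destruct p as [|p].
  - exists []. split; [split; simpl; auto|reflexivity].
  - destruct (fib_bracket (S p)) as [j [Hj [H1 H2]]]; [lia|].
    pose proof (fib_pos j ltac:(lia)).
    destruct (IH (S p - fib j)) as [Z [HZ HN]]; [lia|].
    exists (j :: Z). split; [|simpl; lia].
    assert (Hlt : Nz Z < fib (j - 1)).
    { assert (fib (S j) = fib j + fib (j-1)).
      { destruct j as [|[|j]]; [lia|lia|]. rewrite fib_SS. f_equal. }
      lia. }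
    destruct HZ as [HZ1 HZ2]. split.
    + constructor; auto.
    + split; auto. pose proof (N_ge_elem Z) as HG.
      rewrite Forall_forall in *. intros e He. specialize (HG e He).
      assert (fib e < fib (j-1)) by lia. apply fib_lt_inv in H0. lia.
Qed.

Lemma fib_index_from_spec : forall fuel k n j, k <= j -> j - k <= fuel ->
  n <= fib (S j) -> (forall i, k <= i < j -> fib (S i) < n) ->
  fib_index_from fuel k n = j.
Proof.
  induction fuel; intros k n j H1 H2 H3 H4; cbn [fib_index_from].
  - lia.
  - destruct (Nat.eq_dec k j).
    + subst. apply Nat.leb_le in H3. rewrite H3. reflexivity.
    + assert (Hk : fib (S k) < n) by (apply H4; lia).
      destruct (Nat.leb n (fib (S k))) eqn:E.
      * apply Nat.leb_le in E. lia.
      * apply IHfuel; try lia. intros i Hi. apply H4. lia.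
Qed.

Lemma fib_index_spec n j : 2 <= j -> fib j < n <= fib (S j) -> fib_index n = j.
Proof.
  intros Hj [H1 H2]. unfold fib_index. apply fib_index_from_spec; try lia.
  - pose proof (fib_ge j). lia.
  - intros i Hi. pose proof (fib_mono (S i) j ltac:(lia)). lia.
Qed.

Lemma fib_index_from_ge : forall fu m k, 2 <= k -> 2 <= fib_index_from fu k m.
Proof. induction fu; intros; cbn [fib_index_from]; [lia|].
  destruct (Nat.leb m (fib (S k))); [lia|]. apply IHfu; lia. Qed.

Lemma a_fuel_stable : forall f g n, n <= f -> n <= g -> a_fuel f n = a_fuel g n.
Proof.
  induction f; intros g n Hf Hg.
  - assert (n = 0) by lia. subst. destruct g; reflexivity.
  - destruct g; [assert (n = 0) by lia; subst; reflexivity|]. simpl. destruct n as [|[|n]]; try reflexivity.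
    f_equal. apply IHf.
    + assert (1 <= fib (fib_index (S (S n)))).
      { apply fib_pos. unfold fib_index. pose proof (fib_index_from_ge (S (S n)) (S (S n)) 2 ltac:(lia)); lia. }
      lia.
    + assert (1 <= fib (fib_index (S (S n)))).
      { apply fib_pos. unfold fib_index. pose proof (fib_index_from_ge (S (S n)) (S (S n)) 2 ltac:(lia)); lia. }
      lia.
Qed.

Lemma a_fuel_S f n : 2 <= n ->
  a_fuel (S f) n = fib (S (fib_index n)) - a_fuel f (n - fib (fib_index n)).
Proof. intros H. destruct n as [|[|n]]; [lia|lia|reflexivity]. Qed.

Lemma a_rec n j : 2 <= j -> fib j < n <= fib (S j) -> a n = fib (S j) - a (n - fib j).
Proof.
  intros Hj Hn. pose proof (fib_pos j ltac:(lia)).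
  assert (2 <= n).
  { destruct j as [|[|j]]; [lia|lia|]. rewrite fib_SS in Hn. pose proof (fib_pos (S j) ltac:(lia)). lia. }
  unfold a at 1. destruct n as [|n]; [lia|].
  rewrite a_fuel_S by lia. rewrite (fib_index_spec _ j Hj Hn). f_equal.
  unfold a. apply a_fuel_stable; lia.
Qed.

Fixpoint Sf (c : nat) (L : list nat) : Z :=
  match L with [] => 0%Z | j :: t => (Z.of_nat (fib (j + c)) - Sf c t)%Z end.
Fixpoint sg (L : list nat) : Z := match L with [] => 1%Z | _ :: t => (- sg t)%Z end.
Fixpoint od (L : list nat) : Z := match L with [] => 0%Z | _ :: t => (1 - od t)%Z end.

Lemma sg_od L : sg L = (1 - 2 * od L)%Z.
Proof. induction L; cbn [sg od]; lia. Qed.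
Lemma od_01 L : od L = 0%Z \/ od L = 1%Z.
Proof. induction L; cbn [sg od]; lia. Qed.

Lemma fib_split j : 1 <= j -> fib (S j) = fib j + fib (j - 1).
Proof. intros. destruct j as [|j]; [lia|]. simpl (S j - 1). rewrite Nat.sub_0_r. apply fib_SS. Qed.

Lemma valid_tail j t : valid (j :: t) -> valid t /\ 2 <= j /\ Forall (fun e => e + 2 <= j) t.
Proof. intros [H1 [H2 H3]]. inversion H1; subst. repeat split; auto. Qed.

Lemma Sf_bound c : forall L h, valid L -> Forall (fun e => e <= h) L ->
  (0 <= Sf c L <= Z.of_nat (fib (h + c)))%Z.
Proof.
  induction L as [|j t IH]; intros h HV HF; cbn [Sf]; [lia|].
  apply valid_tail in HV as [HV [Hj HG]]. inversion HF; subst.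
  assert (H := IH (j - 2) HV ltac:(eapply Forall_impl; [|exact HG]; simpl; intros; lia)).
  pose proof (fib_mono (j - 2 + c) (j + c) ltac:(lia)).
  pose proof (fib_mono (j + c) (h + c) ltac:(lia)). lia.
Qed.

Lemma Ea : forall L, valid L -> Z.of_nat (a (Nz L + 1)) = (Sf 1 L + sg L)%Z.
Proof.
  induction L as [|j t IH]; intros HV; [reflexivity|].
  pose proof HV as HV0.
  apply valid_tail in HV as [HV [Hj HG]].
  assert (HN : Nz t < fib (S (j - 2))).
  { apply N_bound; auto. eapply Forall_impl; [|exact HG]; simpl; intros; lia. }
  replace (S (j - 2)) with (j - 1) in HN by lia.
  pose proof (fib_split j ltac:(lia)). pose proof (fib_pos j ltac:(lia)).
  cbn [Nz].
  rewrite (a_rec _ j) by (auto; lia).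
  replace (fib j + Nz t + 1 - fib j) with (Nz t + 1) by lia.
  specialize (IH HV).
  assert (HB := Sf_bound 1 t (j - 2) HV ltac:(eapply Forall_impl; [|exact HG]; simpl; intros; lia)).
  replace (j - 2 + 1) with (j - 1) in HB by lia.
  assert (sg t = 1 \/ sg t = -1)%Z by (rewrite sg_od; destruct (od_01 t); lia).
  rewrite Nat2Z.inj_sub by lia. rewrite IH. cbn [Sf sg]. rewrite Nat.add_1_r. lia.
Qed.

Open Scope R_scope.

Definition tau := phi - 1.
Definition psi := - tau.

Lemma tau_facts : tau * tau + tau = 1 /\ 0 < tau < 1 /\ phi = tau + 1.
Proof.
  assert (H5 : sqrt 5 * sqrt 5 = 5) by (apply sqrt_sqrt; lra).
  assert (H0 : 0 <= sqrt 5) by apply sqrt_pos.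
  assert (2 < sqrt 5 < 3) by (split; nra).
  unfold tau, phi. repeat split; [nra|lra|lra|lra].
Qed.

Lemma tau_pow_le p k : tau ^ (p + k) <= tau ^ p.
Proof.
  destruct tau_facts as [_ [[H1 H2] _]].
  rewrite pow_add. assert (0 < tau ^ p) by (apply pow_lt; lra).
  assert (tau ^ k <= 1).
  { induction k; simpl; [lra|]. assert (0 < tau ^ k) by (apply pow_lt; lra). nra. }
  nra.
Qed.

Lemma phi_fib j : phi * INR (fib j) = INR (fib (S j)) - psi ^ j.
Proof.
  destruct tau_facts as [Ht [_ Hp]].
  assert (forall j, phi * INR (fib j) = INR (fib (S j)) - psi ^ j /\
                    phi * INR (fib (S j)) = INR (fib (S (S j))) - psi ^ (S j)).
  { induction j0 as [|j0 [IH1 IH2]].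
    - simpl. unfold psi. rewrite Hp. lra.
    - split; [exact IH2|].
      assert (E1 : INR (fib (S (S (S j0)))) = INR (fib (S (S j0))) + INR (fib (S j0)))
        by (rewrite (fib_SS (S j0)), plus_INR; reflexivity).
      assert (E2 : phi * INR (fib (S (S j0))) = phi * INR (fib (S j0)) + phi * INR (fib j0))
        by (rewrite (fib_SS j0), plus_INR; ring).
      assert (E3 : psi ^ S (S j0) = psi ^ (S j0) + psi ^ j0).
      { simpl. unfold psi. ring_simplify. replace (tau ^ 2) with (tau * tau) by ring.
        replace (tau * tau) with (1 - tau) by lra. ring. }
      rewrite E1, E2, E3, IH1, IH2. ring. }
  apply H.
Qed.

Fixpoint Ef (L : list nat) : R := match L with [] => 0 | j :: t => psi ^ j + Ef t end.
Fixpoint Gf (c : nat) (L : list nat) : R := match L with [] => 0 | j :: t => psi ^ (j + c) - Gf c t end.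
Fixpoint Tf (L : list nat) : R := match L with [] => 0 | j :: t => tau ^ j + Tf t end.

Lemma phi_Nz L : phi * INR (Nz L) = INR (Nz (map S L)) - Ef L.
Proof. induction L as [|a0 L IHL]; cbn [Nz map Ef]; [simpl; ring|]. rewrite !plus_INR.
  rewrite Rmult_plus_distr_l, IHL, phi_fib. ring. Qed.

Lemma phi_Sf c L : phi * IZR (Sf c L) = IZR (Sf (S c) L) - Gf c L.
Proof. induction L as [|a0 L IHL]; cbn [Sf Gf]; [simpl; ring|]. rewrite !minus_IZR.
  rewrite <- !INR_IZR_INZ. rewrite Rmult_minus_distr_l, IHL, phi_fib.
  replace (a0 + S c)%nat with (S (a0 + c)) by lia. ring. Qed.

Lemma abs_psi k : Rabs (psi ^ k) = tau ^ k.
Proof. destruct tau_facts as [_ [H _]]. rewrite <- RPow_abs. unfold psi.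
  rewrite Rabs_Ropp, Rabs_pos_eq by lra. reflexivity. Qed.

Lemma Ef_abs L : Rabs (Ef L) <= Tf L.
Proof. induction L as [|a0 L IHL]; cbn [Ef Tf]; [rewrite Rabs_R0; lra|].
  pose proof (Rabs_triang (psi ^ a0) (Ef L)). rewrite abs_psi in H. lra. Qed.

Lemma Gf_abs c L : Rabs (Gf c L) <= tau ^ c * Tf L.
Proof. induction L as [|a0 L IHL]; cbn [Gf Tf]; [rewrite Rabs_R0; lra|].
  pose proof (Rabs_triang (psi ^ (a0 + c)) (- Gf c L)). rewrite abs_psi, Rabs_Ropp in H.
  rewrite (pow_add tau) in H. unfold Rminus. rewrite Rmult_plus_distr_l.
  assert (tau ^ a0 * tau ^ c = tau ^ c * tau ^ a0) by ring. lra. Qed.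

Lemma gapsok_app : forall l x, gapsok (l ++ [x]) -> gapsok l /\ Forall (fun e => (x + 2 <= e)%nat) l.
Proof.
  induction l as [|y l IH]; intros x H; [simpl; auto|].
  destruct H as [H1 H2]. apply IH in H2 as [H2 H3]. apply Forall_app in H1 as [H1 H4].
  inversion H4; subst. split; [split; auto|constructor; auto].
Qed.

Lemma Tf_app l x : Tf (l ++ [x]) = Tf l + tau ^ x.
Proof. induction l; cbn [app Tf]; [ring|]. rewrite IHl; ring. Qed.
Lemma Ef_app l x : Ef (l ++ [x]) = Ef l + psi ^ x.
Proof. induction l; cbn [app Ef]; [ring|]. rewrite IHl; ring. Qed.

Lemma Tf_bound : forall L p, gapsok L -> Forall (fun e => (p + 1 <= e)%nat) L -> Tf L < tau ^ p.
Proof.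
  destruct tau_facts as [Ht [Hr _]].
  induction L as [|x l IH] using rev_ind; intros p HG HF.
  - simpl. apply pow_lt; lra.
  - apply gapsok_app in HG as [HG HG2]. apply Forall_app in HF as [_ HF]. inversion HF; subst.
    rewrite Tf_app. destruct x as [|q]; [lia|].
    assert (Tf l < tau ^ (q + 2)).
    { apply IH; auto. eapply Forall_impl; [|exact HG2]. simpl; intros; lia. }
    assert (tau ^ (q + 2) + tau ^ S q = tau ^ q).
    { rewrite pow_add. simpl. replace (tau * (tau * 1)) with (tau * tau) by ring.
      replace (tau * tau) with (1 - tau) by lra. ring. }
    pose proof (tau_pow_le p (q - p)) as Hq. replace (p + (q - p))%nat with q in Hq by lia. lra.
Qed.

Lemma psi_pow_parity x : (Nat.Even x /\ psi ^ x = tau ^ x) \/ (Nat.Odd x /\ psi ^ x = - tau ^ x).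
Proof.
  unfold psi. replace (- tau) with ((-1) * tau) by ring. rewrite Rpow_mult_distr.
  destruct (Nat.Even_or_Odd x) as [[y Hy]|[y Hy]]; subst.
  - left. split; [exists y; auto|]. rewrite pow_1_even. ring.
  - right. split; [exists y; auto|]. replace (2 * y + 1)%nat with (S (2 * y)) by lia.
    rewrite pow_1_odd. ring.
Qed.

Lemma Ef_bound L : valid L -> - (tau * tau) < Ef L <= tau.
Proof.
  destruct tau_facts as [Ht [Hr _]].
  intros [HF HG]. destruct L as [|y l'] using rev_ind.
  - simpl. nra.
  - clear IHl'. rename l' into l. apply gapsok_app in HG as [HG HG2].
    apply Forall_app in HF as [_ HF]. inversion HF; subst.
    rewrite Ef_app. pose proof (Ef_abs l) as HA.
    destruct y as [|q]; [lia|].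
    assert (Tf l < tau ^ (q + 2)).
    { apply Tf_bound; auto. eapply Forall_impl; [|exact HG2]. simpl; intros; lia. }
    assert (E2 : tau ^ (q + 2) = tau ^ q * (tau * tau)) by (rewrite pow_add; simpl; ring).
    assert (tau ^ S q = tau ^ q * tau) by (simpl; ring).
    assert (0 < tau ^ q) by (apply pow_lt; lra).
    assert (HA2 : - Tf l <= Ef l <= Tf l) by (unfold Rabs in HA; destruct (Rcase_abs (Ef l)); lra).
    assert (Hsum : tau ^ q * (tau * tau) + tau ^ q * tau = tau ^ q) by (rewrite <- Rmult_plus_distr_l, Ht; ring).
    assert (Hpos2 : 0 < tau ^ q * (tau * tau)) by (apply Rmult_lt_0_compat; nra).
    assert (Hpos1 : tau ^ q * tau < tau ^ q) by nra.
    assert (Hpos3 : tau ^ q * (tau * tau) < tau ^ q * tau) by (apply Rmult_lt_compat_l; nra).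
    assert (Htt : 0 < tau * tau) by nra.
    destruct (psi_pow_parity (S q)) as [[He Hp]|[Ho Hp]]; rewrite Hp.
    +
      assert (Hq1 : (1 <= q)%nat) by (destruct He as [k Hk]; lia).
      pose proof (tau_pow_le 1 (q - 1)) as Hle. replace (1 + (q - 1))%nat with q in Hle by lia.
      rewrite ?pow_1 in Hle. simpl in Hle. lra.
    + assert (Hq2 : (2 <= q)%nat).
      { destruct Ho as [k Hk]. destruct q as [|[|q]]; [lia| |lia].
        exfalso. lia. }
      pose proof (tau_pow_le 2 (q - 2)) as Hle. replace (2 + (q - 2))%nat with q in Hle by lia.
      rewrite ?pow_1 in Hle. simpl in Hle. lra.
Qed.

Close Scope R_scope.

Open Scope R_scope.

Lemma Int_part_spec r z : IZR z <= r < IZR z + 1 -> Int_part r = z.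
Proof. intros [H1 H2]. unfold Int_part. rewrite <- (up_tech r z H1).
  - ring. - rewrite plus_IZR. exact H2. Qed.

Lemma valid_map_S L : valid L -> valid (map S L).
Proof.
  intros [H1 H2]. split.
  - apply Forall_map. eapply Forall_impl; [|exact H1]; simpl; intros; lia.
  - clear H1. induction L as [|j t IH]; simpl; auto. destruct H2 as [H2 H3].
    split; [|auto]. apply Forall_map. eapply Forall_impl; [|exact H2]; simpl; intros; lia.
Qed.

Lemma Eb L : valid L -> b (Nz L + 1) = (Nz (map S L) + 1)%nat.
Proof.
  intros HV. destruct tau_facts as [Ht [Hr Hp]].
  pose proof (Ef_bound L HV). unfold b.
  rewrite (Int_part_spec _ (Z.of_nat (Nz (map S L) + 1))).
  - apply Nat2Z.id.
  - rewrite <- INR_IZR_INZ, !plus_INR, Rmult_plus_distr_l, phi_Nz. simpl INR. lra.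
Qed.

Lemma Ed L : valid L -> d (Nz L + 1) = (Nz L + 1 + Nz (map S L) + 1)%nat.
Proof.
  intros HV. destruct tau_facts as [Ht [Hr Hp]].
  pose proof (Ef_bound L HV). unfold d.
  rewrite (Int_part_spec _ (Z.of_nat (Nz L + 1 + Nz (map S L) + 1))).
  - apply Nat2Z.id.
  - rewrite <- INR_IZR_INZ, !plus_INR, !INR_1.
    replace (phi ^ 2) with (phi + 1) by (rewrite Hp; simpl; nra).
    replace ((phi + 1) * (INR (Nz L) + 1)) with (phi * INR (Nz L) + phi + INR (Nz L) + 1) by ring.
    rewrite phi_Nz. simpl INR. lra.
Qed.

Lemma Sf_nonempty c j t : valid (j :: t) ->
  (Z.of_nat (fib (j + c)) - Z.of_nat (fib (j - 2 + c)) <= Sf c (j :: t))%Z.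
Proof.
  intros HV. pose proof HV as HV0. apply valid_tail in HV as [HV [Hj HG]].
  assert (H := Sf_bound c t (j - 2) HV ltac:(eapply Forall_impl; [|exact HG]; simpl; intros; lia)).
  cbn [Sf]. lia.
Qed.

Lemma Eba L m : valid L -> Z.of_nat m = (Sf 1 L + sg L)%Z ->
  Z.of_nat (b m) = (Sf 2 L + sg L - od L)%Z.
Proof.
  intros HV Hm. destruct tau_facts as [Ht [Hr Hp]].
  assert (HT : Tf L < tau ^ 1).
  { destruct HV as [HV1 HV2]. apply Tf_bound; auto.
    all: try (eapply Forall_impl; [|exact HV1]; simpl; intros; lia). }
  pose proof (Gf_abs 1 L) as HG. rewrite pow_1 in HT, HG.
  assert (HG2 : - (tau * tau) < Gf 1 L < tau * tau).
  { assert (tau * Tf L < tau * tau) by (apply Rmult_lt_compat_l; lra).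
    unfold Rabs in HG; destruct (Rcase_abs (Gf 1 L)); lra. }
  assert (Hz : (0 <= Sf 2 L + sg L - od L)%Z).
  { rewrite sg_od. destruct (od_01 L) as [E|E]; rewrite E.
    - pose proof (Sf_bound 2 L 0); destruct L as [|j t]; [simpl; lia|].
      pose proof (Sf_nonempty 2 j t HV). pose proof (fib_mono (j - 2 + 2) (j + 2) ltac:(lia)).
      lia.
    - destruct L as [|j t]; [simpl in E; lia|].
      pose proof (Sf_nonempty 2 j t HV). destruct (valid_tail _ _ HV) as [_ [Hj _]].
      replace (j + 2)%nat with (S (S j)) in H by lia.
      rewrite fib_SS in H. replace (j - 2 + 2)%nat with j in H by lia.
      pose proof (fib_pos (S j) ltac:(lia)). pose proof (fib_mono 3 (S j) ltac:(lia)).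
      simpl (fib 3) in H1. lia. }
  unfold b. rewrite (Int_part_spec _ (Sf 2 L + sg L - od L)).
  - apply Z2Nat.id. exact Hz.
  - rewrite INR_IZR_INZ, Hm, plus_IZR, Rmult_plus_distr_l, phi_Sf.
    rewrite sg_od. destruct (od_01 L) as [E|E]; rewrite E; rewrite !minus_IZR, ?plus_IZR, mult_IZR;
    simpl IZR; rewrite Hp; nra.
Qed.

Lemma Sf_map_S c L : Sf c (map S L) = Sf (S c) L.
Proof. induction L as [|j t IH]; cbn [Sf map]; auto. rewrite IH.
  replace (S j + c)%nat with (j + S c)%nat by lia. reflexivity. Qed.
Lemma sg_map f L : sg (map f L) = sg L.
Proof. induction L; cbn [sg map]; lia. Qed.
Lemma od_map f L : od (map f L) = od L.
Proof. induction L; cbn [od map]; lia. Qed.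

Lemma EX L : valid L -> x (Nz L + 1) = od L.
Proof.
  intros HV. unfold x. rewrite Eb by auto. rewrite Ea by (apply valid_map_S; auto).
  rewrite (Eba L (a (Nz L + 1)) HV (Ea L HV)).
  rewrite Sf_map_S, sg_map. lia.
Qed.

Close Scope R_scope.

Definition shd (L : list nat) := map (fun j => S (S j)) L ++ [2%nat].

Lemma Nz_app l l' : Nz (l ++ l') = (Nz l + Nz l')%nat.
Proof. induction l; cbn [Nz app]; lia. Qed.

Lemma Nz_shd L : (Nz (shd L) + 1 = Nz L + 1 + Nz (map S L) + 1)%nat.
Proof. unfold shd. rewrite Nz_app. cbn [Nz fib]. induction L as [|j t IH]; cbn [Nz map]; [lia|].
  rewrite fib_SS. lia. Qed.

Lemma valid_shd L : valid L -> valid (shd L).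
Proof.
  intros [H1 H2]. unfold shd. split.
  - apply Forall_app. split; [|constructor; auto].
    apply Forall_map. eapply Forall_impl; [|exact H1]; simpl; intros; lia.
  - induction L as [|j t IH]; simpl; [split; auto|]. destruct H2 as [H2 H3].
    inversion H1; subst.
    split; [|auto]. apply Forall_app. split; [|constructor; auto; lia].
    apply Forall_map. eapply Forall_impl; [|exact H2]; simpl; intros; lia.
Qed.

Lemma Sf_snoc c l y : Sf c (l ++ [y]) = (Sf c l + sg l * Z.of_nat (fib (y + c)))%Z.
Proof. induction l; cbn [Sf sg app]; [ring|]. rewrite IHl. ring. Qed.
Lemma sg_snoc l y : sg (l ++ [y]) = (- sg l)%Z.
Proof. induction l; cbn [sg app]; lia. Qed.
Lemma od_snoc l y : od (l ++ [y]) = (1 - od l)%Z.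
Proof. induction l; cbn [od app]; lia. Qed.
Lemma Sf_map_SS c L : Sf c (map (fun j => S (S j)) L) = Sf (S (S c)) L.
Proof. induction L as [|j t IH]; cbn [Sf map]; auto. rewrite IH.
  replace (S (S j) + c)%nat with (j + S (S c))%nat by lia. reflexivity. Qed.
Lemma Sf_rec c L : Sf (S (S c)) L = (Sf (S c) L + Sf c L)%Z.
Proof. induction L as [|j t IH]; cbn [Sf]; auto. rewrite IH.
  replace (j + S (S c))%nat with (S (S (j + c))) by lia. rewrite fib_SS.
  replace (j + S c)%nat with (S (j + c)) by lia. lia. Qed.


Lemma getL n (Hn : (1 <= n)%nat) : exists L, valid L /\ n = (Nz L + 1)%nat.
Proof. destruct (zeck_exists (n - 1)) as [L [HV HN]]. exists L. split; auto. lia. Qed.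

Lemma b_pos n (Hn : (1 <= n)%nat) : (1 <= b n)%nat.
Proof. destruct (getL n Hn) as [L [HV ->]]. rewrite Eb by auto. lia. Qed.
Lemma d_pos n (Hn : (1 <= n)%nat) : (1 <= d n)%nat.
Proof. destruct (getL n Hn) as [L [HV ->]]. rewrite Ed by auto. lia. Qed.

Lemma L0 n (Hn : (1 <= n)%nat) : Z.of_nat (a (d n)) = (Z.of_nat (a (b n)) + Z.of_nat (a n) + (2 * x n - 1))%Z.
Proof. destruct (getL n Hn) as [L [HV ->]].
  rewrite Ed, <- Nz_shd, Ea, Eb, Ea, Ea, EX by (auto using valid_shd, valid_map_S).
  unfold shd. rewrite Sf_snoc, sg_snoc, Sf_map_S, Sf_map_SS, !sg_map, Sf_rec, sg_od.
  cbn [fib Nat.add]. lia. Qed.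

Lemma L1 n (Hn : (1 <= n)%nat) : Z.of_nat (a (b (b n))) = (Z.of_nat (a (b n)) + Z.of_nat (a n) + (2 * x n - 1))%Z.
Proof. destruct (getL n Hn) as [L [HV ->]].
  rewrite Eb, Eb, Ea, Ea, Ea, EX by (auto using valid_shd, valid_map_S).
  rewrite !Sf_map_S, !sg_map, Sf_rec, sg_od. lia. Qed.

Lemma L2 n (Hn : (1 <= n)%nat) : Z.of_nat (a (b (d n))) = (2 * Z.of_nat (a (b n)) + Z.of_nat (a n) + (2 * x n - 1))%Z.
Proof. destruct (getL n Hn) as [L [HV ->]].
  rewrite Ed, <- Nz_shd, Eb, Eb, Ea, Ea, Ea, EX by (auto using valid_shd, valid_map_S).
  unfold shd. rewrite map_app. cbn [map]. rewrite Sf_snoc, sg_snoc, !Sf_map_S, Sf_map_SS, !sg_map.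
  rewrite !Sf_rec, sg_od. cbn [fib Nat.add]. lia. Qed.

Lemma L3 n (Hn : (1 <= n)%nat) : x (b n) = x n.
Proof. destruct (getL n Hn) as [L [HV ->]].
  rewrite Eb, EX, EX by (auto using valid_map_S). apply od_map. Qed.

Lemma L4 n (Hn : (1 <= n)%nat) : x (d n) = (1 - x n)%Z.
Proof. destruct (getL n Hn) as [L [HV ->]].
  rewrite Ed, <- Nz_shd, EX, EX by (auto using valid_shd). unfold shd.
  rewrite od_snoc, od_map. reflexivity. Qed.


Lemma count_b_snoc v l : count_b (v ++ [l]) = (count_b v + match l with Lb => 1 | Ld => 0 end)%nat.
Proof. unfold count_b. rewrite filter_app, length_app. destruct l; reflexivity. Qed.
Lemma count_d_snoc v l : count_d (v ++ [l]) = (count_d v + match l with Lb => 0 | Ld => 1 end)%nat.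
Proof. unfold count_d. rewrite filter_app, length_app. destruct l; reflexivity. Qed.
Lemma count_b_rev v : count_b (rev v) = count_b v.
Proof. unfold count_b. rewrite filter_rev, length_rev. reflexivity. Qed.
Lemma count_d_rev v : count_d (rev v) = count_d v.
Proof. unfold count_d. rewrite filter_rev, length_rev. reflexivity. Qed.
Lemma count_pos v : v <> [] -> (1 <= count_b v + count_d v)%nat.
Proof. destruct v as [|l v]; [congruence|]. intros _. unfold count_b, count_d.
  destruct l; simpl; lia. Qed.

Lemma C_snoc v l : v <> [] -> C_word (v ++ [l]) =
  match l with
  | Lb => (Z.of_nat (fib (count_b v + 2 * count_d v)) + C_word v)%Z
  | Ld => (Z.of_nat (fib (count_b v + 2 * count_d v + 1)) - C_word v)%Z
  end.
Proof.
  intros Hv. unfold C_word. rewrite rev_app_distr. simpl (rev [l]). simpl app.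
  assert (Hr : rev v <> []) by (intros E; apply Hv; rewrite <- (rev_involutive v), E; reflexivity).
  destruct (rev v) as [|y r] eqn:E; [congruence|].
  assert (Hb : count_b (y :: r) = count_b v) by (rewrite <- E, count_b_rev; reflexivity).
  assert (Hd : count_d (y :: r) = count_d v) by (rewrite <- E, count_d_rev; reflexivity).
  destruct l.
  - change (C_rev (Lb :: y :: r)) with
      (Z.of_nat (fib (count_b (Lb :: y :: r) + 2 * count_d (Lb :: y :: r) - 1)) + C_rev (y :: r))%Z.
    f_equal. f_equal. f_equal.
    change (count_b (Lb :: y :: r)) with (S (count_b (y :: r))).
    change (count_d (Lb :: y :: r)) with (count_d (y :: r)). lia.
  - change (C_rev (Ld :: y :: r)) with
      (Z.of_nat (fib (count_b (Ld :: y :: r) + 2 * count_d (Ld :: y :: r) - 1)) - C_rev (y :: r))%Z.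
    f_equal. f_equal. f_equal.
    change (count_b (Ld :: y :: r)) with (count_b (y :: r)).
    change (count_d (Ld :: y :: r)) with (S (count_d (y :: r))). lia.
Qed.

Lemma main_aux : forall u, u <> [] -> forall n, (1 <= n)%nat ->
  Z.of_nat (a (apply_word u n)) =
    (Z.of_nat (fib (count_b u + 2 * count_d u)) * Z.of_nat (a (b n))
     + Z.of_nat (fib (count_b u + 2 * count_d u - 1)) * Z.of_nat (a n)
     + C_word u * (2 * x n - 1))%Z.
Proof.
  induction u as [|l v IH] using rev_ind; [congruence|]. intros _ n Hn.
  unfold apply_word. rewrite fold_right_app. simpl (fold_right letter_fun n [l]).
  fold (apply_word v (letter_fun l n)).
  rewrite count_b_snoc, count_d_snoc.
  destruct (list_eq_dec (fun p q : letter => ltac:(decide equality)) v []) as [->|Hv].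
  - destruct l; cbn [letter_fun apply_word fold_right count_b count_d filter length].
    + unfold C_word. cbn [count_b count_d filter length fib app rev C_rev Nat.add Nat.mul Nat.sub]. lia.
    + rewrite (L0 n Hn). unfold C_word.
      cbn [count_b count_d filter length fib app rev C_rev Nat.add Nat.mul Nat.sub]. lia.
  - rewrite C_snoc by auto. pose proof (count_pos v Hv).
    destruct (count_b v + 2 * count_d v)%nat as [|K] eqn:EK; [lia|].
    destruct l; cbn [letter_fun].
    + rewrite (IH Hv (b n) (b_pos n Hn)), (L1 n Hn), (L3 n Hn).
      replace (count_b v + 1 + 2 * (count_d v + 0))%nat with (S (S K)) by lia.
      replace (S (S K) - 1)%nat with (S K) by lia. replace (S K - 1)%nat with K by lia.
      rewrite (fib_SS K), Nat2Z.inj_add. ring.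
    + rewrite (IH Hv (d n) (d_pos n Hn)), (L2 n Hn), (L0 n Hn), (L4 n Hn).
      replace (count_b v + 0 + 2 * (count_d v + 1))%nat with (S (S (S K))) by lia.
      replace (S (S (S K)) - 1)%nat with (S (S K)) by lia. replace (S K - 1)%nat with K by lia.
      replace (S K + 1)%nat with (S (S K)) by lia.
      rewrite (fib_SS (S K)), (fib_SS K), !Nat2Z.inj_add. ring.
Qed.

Theorem theorem23 (u : list letter) (n : nat) :
  u <> [] -> (1 <= n)%nat ->
  let i := count_b u in
  let j := count_d u in
  Z.of_nat (a (apply_word u n)) =
    (Z.of_nat (fib (i + 2 * j)) * Z.of_nat (a (b n))
     + Z.of_nat (fib (i + 2 * j - 1)) * Z.of_nat (a n)
     + C_word u * (2 * x n - 1))%Z.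
Proof. intros Hu Hn. cbv zeta. apply main_aux; auto. Qed.
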